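(* Let $\mathcal K$ be a 2-category which admits Eilenberg–Moore constructions for monads and in which idempotent 2-cells split, and let $J^w:\mathrm{EM}^w(\mathcal K)\to\mathcal K$ be the pseudo-functor described in the context. Let $l$ be a 0-cell, $(t,\mu,\eta)$ a monad on $k$, and $(s,\psi):t\to t$ a 1-cell of $\mathrm{EM}^w(\mathcal K)$. There is a bijective correspondence between (i) pairs $(V,\zeta)$ of a 1-cell $V:l\to J^w(t)$ and a 2-cell $\zeta:J^w(s,\psi)V\Rightarrow V$ in $\mathcal K$; and (ii) pairs $((W,\varrho),\lambda)$ of a 1-cell $(W,\varrho):I(l)\to t$ of $\mathrm{EM}(\mathcal K)$ (i.e. $W:l\to k$, $\varrho:tW\Rightarrow W$ with $\varrho\ast t\varrho=\varrho\ast\mu W$, $\varrho\ast\eta W=W$) and a 2-cell $\lambda:(s,\psi)\circ(W,\varrho)\Rightarrow(W,\varrho)$ of $\mathrm{EM}^w(\mathcal K)$, where $(W,\varrho)$ is regarded as a 1-cell of $\mathrm{EM}^w(\mathcal K)$.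
   Context: Conventions in a 2-category $\mathcal K$: horizontal composition and whiskering by juxtaposition in the order of functor composition; identity 1-cell of $k$ written $k$, identity 2-cell of $V$ written $V$; vertical composition $\ast$ with $\alpha\ast\beta$ meaning $\beta$ then $\alpha$. A monad $(t,\mu,\eta)$ on $k$: associative and unital $\mu:tt\Rightarrow t$, $\eta:k\Rightarrow t$. $I(l)$ is the identity monad $(l,l,l)$ on $l$. $\mathrm{EM}^w(\mathcal K)$: 0-cells monads; 1-cells $(V,\psi):(t,\mu,\eta)\to(t',\mu',\eta')$ with $V:k\to k'$, $\psi:t'V\Rightarrow Vt$, $V\mu\ast\psi t\ast t'\psi=\psi\ast\mu'V$; 2-cells $(V,\psi)\Rightarrow(W,\phi)$ are $\varrho:V\Rightarrow Wt$ with $W\mu\ast\varrho t\ast\psi=W\mu\ast\phi t\ast t'\varrho$ and $\varrho=W\mu\ast\phi t\ast\eta'Wt\ast\varrho$; 1-cell composite $(V',\psi')\circ(V,\psi)=(V'V,V'\psi\ast\psi'V)$. $\mathrm{EM}(\mathcal K)$ is the sub-2-category whose 1-cells additionally satisfy $\psi\ast\eta'V=V\eta$, with all $\mathrm{EM}^w$-2-cells between them. Thus a 2-cell $\lambda:(s,\psi)\circ(W,\varrho)\Rightarrow(W,\varrho)$ is a 2-cell $\lambda:sW\Rightarrow W$ of $\mathcal K$ with $\varrho\ast t\lambda=\lambda\ast s\varrho\ast\psi W$. $\mathcal K$ admits Eilenberg–Moore constructions for monads: the inclusion $I:\mathcal K\to\mathrm{EM}(\mathcal K)$ has a right 2-adjoint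 $J$; each monad $(t,\mu,\eta)$ gives an adjunction $f\dashv v$, $v:J(t)\to k$, unit $\eta$, counit $\epsilon$, $t=vf$, $\mu=v\epsilon f$; for each $l$, $X\mapsto(vX,v\epsilon X)$, $\omega\mapsto v\omega$ is an isomorphism between $\mathcal K(l,J(t))$ and the category of $t$-algebras $(A:l\to k,\alpha:tA\Rightarrow A)$ (morphisms $\rho$ with $\beta\ast t\rho=\rho\ast\alpha$). Idempotent 2-cells split. The pseudo-functor $J^w$: for every 1-cell $(V,\psi):t\to t'$ of $\mathrm{EM}^w(\mathcal K)$ a splitting $Vv\overset{\pi}{\Rightarrow}\widetilde V\overset{\iota}{\Rightarrow}Vv$ of the idempotent $Vv\epsilon\ast\psi v\ast\eta'Vv$ is fixed; $J^w(t)=J(t)$; $J^w(V,\psi):J(t)\to J(t')$ is the unique 1-cell with $v'J^w(V,\psi)=\widetilde V$ and $v'\epsilon'J^w(V,\psi)=\pi\ast Vv\epsilon\ast\psi v\ast t'\iota$; for a 2-cell $\varrho:(V,\psi)\Rightarrow(W,\phi)$, $J^w(\varrho)$ is the unique 2-cell with $v'J^w(\varrho)=\pi\ast Wv\epsilon\ast\varrho v\ast\iota$. This is a pseudo-functor $\mathrm{EM}^w(\mathcal K)\to\mathcal K$. *)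

(* Defs.v *)
(** A strict 2-category.  2-cells between 0-cells a and b form a single type
    [C a b], each 2-cell having a source [s2] and a target [t2] 1-cell.
    Composition operations are total, and the laws are stated under the
    appropriate composability conditions.  This avoids dependent transports. *)
Record TwoCat := {
  Ob : Type;
  Hom : Ob -> Ob -> Type;
  C : Ob -> Ob -> Type;
  s2 : forall {a b} , C a b -> Hom a b;
  t2 : forall {a b} , C a b -> Hom a b;
  id1 : forall a, Hom a a;
  comp1 : forall {a b c} , Hom b c -> Hom a b -> Hom a c;
  id2 : forall {a b} , Hom a b -> C a b;
  vc : forall {a b} , C a b -> C a b -> C a b;              (* vc al be = al * be : be then al *)
  hc : forall {a b c} , C b c -> C a b -> C a c;
  comp1A : forall {a b c d} (h : Hom c d) (g : Hom b c) (f : Hom a b),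
      comp1 h (comp1 g f) = comp1 (comp1 h g) f;
  comp1_id1l : forall {a b} (f : Hom a b), comp1 (id1 b) f = f;
  comp1_id1r : forall {a b} (f : Hom a b), comp1 f (id1 a) = f;
  s2_id2 : forall {a b} (f : Hom a b), s2 (id2 f) = f;
  t2_id2 : forall {a b} (f : Hom a b), t2 (id2 f) = f;
  s2_vc : forall {a b} (al be : C a b), s2 al = t2 be -> s2 (vc al be) = s2 be;
  t2_vc : forall {a b} (al be : C a b), s2 al = t2 be -> t2 (vc al be) = t2 al;
  s2_hc : forall {a b c} (al : C b c) (be : C a b), s2 (hc al be) = comp1 (s2 al) (s2 be);
  t2_hc : forall {a b c} (al : C b c) (be : C a b), t2 (hc al be) = comp1 (t2 al) (t2 be);
  vcA : forall {a b} (al be ga : C a b), s2 al = t2 be -> s2 be = t2 ga ->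
      vc al (vc be ga) = vc (vc al be) ga;
  vc_id2l : forall {a b} (al : C a b), vc (id2 (t2 al)) al = al;
  vc_id2r : forall {a b} (al : C a b), vc al (id2 (s2 al)) = al;
  hcA : forall {a b c d} (al : C c d) (be : C b c) (ga : C a b),
      hc al (hc be ga) = hc (hc al be) ga;
  hc_id2l : forall {a b} (al : C a b), hc (id2 (id1 b)) al = al;
  hc_id2r : forall {a b} (al : C a b), hc al (id2 (id1 a)) = al;
  hc_id2 : forall {a b c} (g : Hom b c) (f : Hom a b), hc (id2 g) (id2 f) = id2 (comp1 g f);
  interchange : forall {a b c} (al al' : C b c) (be be' : C a b),
      s2 al = t2 al' -> s2 be = t2 be' ->
      hc (vc al al') (vc be be') = vc (hc al be) (hc al' be')
}.

Arguments Hom : clear implicits.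
Arguments C : clear implicits.
Arguments s2 {_ _ _}.
Arguments t2 {_ _ _}.
Arguments id1 {_}.
Arguments comp1 {_ _ _ _}.
Arguments id2 {_ _ _}.
Arguments vc {_ _ _}.
Arguments hc {_ _ _ _}.

Section Defs.
Variable K : TwoCat.

Definition cell2 {a b} (al : C K a b) (f g : Hom K a b) : Prop :=
  s2 al = f /\ t2 al = g.

(** whiskerings: [wl V al] is "V al", [wr al V] is "al V". *)
Definition wl {a b c} (V : Hom K b c) (al : C K a b) : C K a c := hc (id2 V) al.
Definition wr {a b c} (al : C K b c) (V : Hom K a b) : C K a c := hc al (id2 V).

Definition is_monad {k} (t : Hom K k k) (mu eta : C K k k) : Prop :=
  cell2 mu (comp1 t t) t /\ cell2 eta (id1 k) t /\
  vc mu (wl t mu) = vc mu (wr mu t) /\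
  vc mu (wl t eta) = id2 t /\
  vc mu (wr eta t) = id2 t.

Definition is_alg {l k} (t : Hom K k k) (mu eta : C K k k)
    (A : Hom K l k) (alpha : C K l k) : Prop :=
  cell2 alpha (comp1 t A) A /\
  vc alpha (wl t alpha) = vc alpha (wr mu A) /\
  vc alpha (wr eta A) = id2 A.

(** Eilenberg-Moore object data (J, v, f, eps) for the monad (t, mu, eta) on k:
    adjunction f -| v with unit eta and counit eps, t = v f, mu = v eps f, and
    for every l the comparison X |-> (vX, v eps X), omega |-> v omega is an
    isomorphism of K(l, J) with the category of t-algebras. *)
Definition EM_data {k} (t : Hom K k k) (mu eta : C K k k)
    (J : Ob K) (v : Hom K J k) (f : Hom K k J) (eps : C K J J) : Prop :=
  cell2 eps (comp1 f v) (id1 J) /\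
  comp1 v f = t /\
  mu = wr (wl v eps) f /\
  vc (wl v eps) (wr eta v) = id2 v /\
  vc (wr eps f) (wl f eta) = id2 f /\
  (forall l (A : Hom K l k) (alpha : C K l k), is_alg t mu eta A alpha ->
     exists! X : Hom K l J, comp1 v X = A /\ wr (wl v eps) X = alpha) /\
  (forall l (X Y : Hom K l J) (rho : C K l k),
     cell2 rho (comp1 v X) (comp1 v Y) ->
     vc (wr (wl v eps) Y) (wl t rho) = vc rho (wr (wl v eps) X) ->
     exists! om : C K l J, cell2 om X Y /\ wl v om = rho).

Definition admits_EM : Prop :=
  forall k (t : Hom K k k) (mu eta : C K k k), is_monad t mu eta ->
  exists (J : Ob K) (v : Hom K J k) (f : Hom K k J) (eps : C K J J),
    EM_data t mu eta J v f eps.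

Definition idempotents_split : Prop :=
  forall a b (f : Hom K a b) (e : C K a b), cell2 e f f -> vc e e = e ->
  exists (g : Hom K a b) (p i : C K a b),
    cell2 p f g /\ cell2 i g f /\ vc p i = id2 g /\ vc i p = e.

Definition EMw_1cell {k k'} (t : Hom K k k) (mu : C K k k)
    (t' : Hom K k' k') (mu' : C K k' k') (V : Hom K k k') (psi : C K k k') : Prop :=
  cell2 psi (comp1 t' V) (comp1 V t) /\
  vc (wl V mu) (vc (wr psi t) (wl t' psi)) = vc psi (wr mu' V).

Definition EM_1cell {k k'} (t : Hom K k k) (mu eta : C K k k)
    (t' : Hom K k' k') (mu' eta' : C K k' k') (V : Hom K k k') (psi : C K k k') : Prop :=
  EMw_1cell t mu t' mu' V psi /\ vc psi (wr eta' V) = wl V eta.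

Definition EMw_2cell {k k'} (t : Hom K k k) (mu : C K k k)
    (t' : Hom K k' k') (eta' : C K k' k')
    (V : Hom K k k') (psi : C K k k') (W : Hom K k k') (phi : C K k k')
    (rho : C K k k') : Prop :=
  cell2 rho V (comp1 W t) /\
  vc (wl W mu) (vc (wr rho t) psi) = vc (wl W mu) (vc (wr phi t) (wl t' rho)) /\
  rho = vc (wl W mu) (vc (wr phi t) (vc (wr eta' (comp1 W t)) rho)).

(** 1-cell composite (V', psi') o (V, psi) = (V'V, V'psi * psi'V). *)
Definition EMw_comp_cell {k k' k''} (V' : Hom K k' k'') (psi' : C K k' k'')
    (V : Hom K k k') (psi : C K k k') : C K k k'' :=
  vc (wl V' psi) (wr psi' V).

Definition Imon_t (l : Ob K) : Hom K l l := id1 l.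
Definition Imon_mu (l : Ob K) : C K l l := id2 (id1 l).
Definition Imon_eta (l : Ob K) : C K l l := id2 (id1 l).

End Defs.

Arguments cell2 {K a b}.
Arguments wl {K a b c}.
Arguments wr {K a b c}.
Arguments is_monad {K k}.
Arguments is_alg {K l k}.
Arguments EM_data {K k}.
Arguments EMw_1cell {K k k'}.
Arguments EM_1cell {K k k'}.
Arguments EMw_2cell {K k k'}.
Arguments EMw_comp_cell {K k k' k''}.
Arguments Imon_t {K}.
Arguments Imon_mu {K}.
Arguments Imon_eta {K}.

(* Main.v *)
Require Import Defs.
From Stdlib Require Import Setoid ClassicalEpsilon ProofIrrelevance.
Section Gen.
Variable K : TwoCat.
Implicit Types (a b c : Ob K).

Lemma vc_idl' a b (x : C K a b) g : t2 x = g -> vc (id2 g) x = x.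
Proof. intros <-; apply vc_id2l. Qed.
Lemma vc_idr' a b (x : C K a b) g : s2 x = g -> vc x (id2 g) = x.
Proof. intros <-; apply vc_id2r. Qed.

Lemma id2_vc a b (g : Hom K a b) : vc (id2 g) (id2 g) = id2 g.
Proof. apply vc_idl'. apply t2_id2. Qed.

Lemma wl_vc a b c (V : Hom K b c) (x y : C K a b) : s2 x = t2 y ->
  wl V (vc x y) = vc (wl V x) (wl V y).
Proof. intros H. unfold wl. transitivity (hc (vc (id2 V) (id2 V)) (vc x y)); [rewrite id2_vc; reflexivity|].
  apply interchange; auto. rewrite s2_id2, t2_id2; auto. Qed.
Lemma wr_vc a b c (V : Hom K a b) (x y : C K b c) : s2 x = t2 y ->
  wr (vc x y) V = vc (wr x V) (wr y V).
Proof. intros H. unfold wr. transitivity (hc (vc x y) (vc (id2 V) (id2 V))); [rewrite id2_vc; reflexivity|].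
  apply interchange; auto. rewrite s2_id2, t2_id2; auto. Qed.
Lemma wl_comp a b c d (V : Hom K c d) (W : Hom K b c) (x : C K a b) :
  wl (comp1 V W) x = wl V (wl W x).
Proof. unfold wl. rewrite hcA, hc_id2. reflexivity. Qed.
Lemma wr_comp a b c d (x : C K c d) (V : Hom K b c) (W : Hom K a b) :
  wr x (comp1 V W) = wr (wr x V) W.
Proof. unfold wr. rewrite <- hcA, hc_id2. reflexivity. Qed.
Lemma wl_wr a b c d (V : Hom K c d) (x : C K b c) (W : Hom K a b) :
  wl V (wr x W) = wr (wl V x) W.
Proof. unfold wl, wr. apply hcA. Qed.
Lemma wl_id1 a b (x : C K a b) : wl (id1 b) x = x.
Proof. apply hc_id2l. Qed.
Lemma wr_id1 a b (x : C K a b) : wr x (id1 a) = x.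
Proof. apply hc_id2r. Qed.
Lemma wl_id2 a b c (V : Hom K b c) (g : Hom K a b) : wl V (id2 g) = id2 (comp1 V g).
Proof. apply hc_id2. Qed.
Lemma wr_id2 a b c (V : Hom K a b) (g : Hom K b c) : wr (id2 g) V = id2 (comp1 g V).
Proof. apply hc_id2. Qed.
Lemma natur a b c (x : C K b c) (y : C K a b) f g f' g' :
  s2 x = f -> t2 x = g -> s2 y = f' -> t2 y = g' ->
  vc (wr x g') (wl f y) = vc (wl g y) (wr x f').
Proof. intros H1 H2 H3 H4. unfold wl, wr.
  transitivity (hc x y).
  - rewrite <- interchange; [| rewrite t2_id2; auto | rewrite s2_id2; auto].
    rewrite vc_idr', vc_idl'; auto.
  - rewrite <- interchange; [| rewrite s2_id2; auto | rewrite t2_id2; auto].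
    rewrite vc_idr', vc_idl'; auto.
Qed.
Lemma ctx2 a b (x y z r : C K a b) : vc x y = z -> s2 x = t2 y -> s2 y = t2 r ->
  vc x (vc y r) = vc z r.
Proof. intros <- H1 H2. apply vcA; auto. Qed.
End Gen.

Section Main.
Variable K : TwoCat.
Variables (l k : Ob K) (t : Hom K k k) (mu eta : C K k k).
Hypotheses (Hmu_s : s2 mu = comp1 t t) (Hmu_t : t2 mu = t)
  (Heta_s : s2 eta = id1 k) (Heta_t : t2 eta = t)
  (Hassoc : vc mu (wl t mu) = vc mu (wr mu t))
  (Hun1 : vc mu (wl t eta) = id2 t) (Hun2 : vc mu (wr eta t) = id2 t).
Variables (J : Ob K) (v : Hom K J k) (f : Hom K k J) (eps : C K J J).
Hypotheses (Heps_s : s2 eps = comp1 f v) (Heps_t : t2 eps = id1 J)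
  (Hvf : comp1 v f = t) (Hmu_def : mu = wr (wl v eps) f)
  (Htri1 : vc (wl v eps) (wr eta v) = id2 v)
  (Hump1 : forall l (A : Hom K l k) (alpha : C K l k), is_alg t mu eta A alpha ->
     exists! X : Hom K l J, comp1 v X = A /\ wr (wl v eps) X = alpha)
  (Hump2 : forall l (X Y : Hom K l J) (rho : C K l k),
     cell2 rho (comp1 v X) (comp1 v Y) ->
     vc (wr (wl v eps) Y) (wl t rho) = vc rho (wr (wl v eps) X) ->
     exists! om : C K l J, cell2 om X Y /\ wl v om = rho).
Variables (s : Hom K k k) (psi : C K k k).
Hypotheses (Hpsi_s : s2 psi = comp1 t s) (Hpsi_t : t2 psi = comp1 s t)
  (Hpsi : vc (wl s mu) (vc (wr psi t) (wl t psi)) = vc psi (wr mu s)).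
Variables (sv : Hom K J k) (pi iota : C K J k).
Hypotheses (Hpi_s : s2 pi = comp1 s v) (Hpi_t : t2 pi = sv)
  (Hiota_s : s2 iota = sv) (Hiota_t : t2 iota = comp1 s v)
  (Hpiiota : vc pi iota = id2 sv)
  (Hiotapi : vc iota pi =
             vc (wl s (wl v eps)) (vc (wr psi v) (wr eta (comp1 s v)))).
Variable (Js : Hom K J J).
Hypotheses (HJs1 : comp1 v Js = sv)
  (HJs2 : wr (wl v eps) Js =
          vc pi (vc (wl s (wl v eps)) (vc (wr psi v) (wl t iota)))).

Lemma Hvf' a (X : Hom K k a) : comp1 (comp1 X v) f = comp1 X t.
Proof. rewrite <- comp1A, Hvf; reflexivity. Qed.
Lemma HJs1' a (X : Hom K k a) : comp1 (comp1 X v) Js = comp1 X sv.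
Proof. rewrite <- comp1A, HJs1; reflexivity. Qed.

Ltac n1 := repeat (rewrite ?comp1A, ?comp1_id1l, ?comp1_id1r, ?Hvf, ?Hvf', ?HJs1, ?HJs1').

Ltac cst := unfold wl, wr, EMw_comp_cell; repeat st_step; n1; reflexivity
with st_step := first
 [ rewrite s2_hc | rewrite t2_hc | rewrite s2_id2 | rewrite t2_id2
 | rewrite s2_vc by cst | rewrite t2_vc by cst
 | match goal with H : s2 ?a = _ |- context [s2 ?a] => rewrite H end
 | match goal with H : t2 ?a = _ |- context [t2 ?a] => rewrite H end ].

Ltac ra := repeat (rewrite <- vcA by cst).


Lemma cell_veps : cell2 (wl v eps) (comp1 t v) v.
Proof. split; cst. Qed.


Lemma eps_eps : vc eps (wl (comp1 f v) eps) = vc eps (wr eps (comp1 f v)).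
Proof. pose proof (natur _ _ _ _ eps eps (comp1 f v) (id1 J) (comp1 f v) (id1 J) Heps_s Heps_t Heps_s Heps_t) as N.
  rewrite wr_id1, wl_id1 in N. exact N. Qed.

Lemma assoc_v : vc (wl v eps) (wl t (wl v eps)) = vc (wl v eps) (wr mu v).
Proof.
  replace (wl t (wl v eps)) with (wl v (wl (comp1 f v) eps))
    by (rewrite <- Hvf, !wl_comp; reflexivity).
  rewrite <- wl_vc by cst. rewrite eps_eps, wl_vc by cst.
  rewrite Hmu_def, <- wr_comp, <- wl_wr. reflexivity.
Qed.

Lemma alg_v : is_alg t mu eta v (wl v eps).
Proof. split; [apply cell_veps|split; [apply assoc_v|apply Htri1]]. Qed.

Section Alg.
Variables (l' : Ob K) (A : Hom K l' k) (al : C K l' k).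
Hypotheses (Hal_s : s2 al = comp1 t A) (Hal_t : t2 al = A)
  (Hal_as : vc al (wl t al) = vc al (wr mu A))
  (Hal_un : vc al (wr eta A) = id2 A).

Lemma alg_wh l2 (V : Hom K l2 l') : is_alg t mu eta (comp1 A V) (wr al V).
Proof. split; [split; cst|split].
  - rewrite wl_wr, wr_comp, <- !wr_vc by cst. rewrite Hal_as. reflexivity.
  - rewrite wr_comp, <- wr_vc by cst. rewrite Hal_un, wr_id2. reflexivity.
Qed.

Local Notation Xa := (vc (wl s al) (wr psi A)).
Local Notation ea := (vc Xa (wr eta (comp1 s A))).

Lemma Xa_s : s2 Xa = comp1 (comp1 t s) A. Proof. cst. Qed.
Lemma Xa_t : t2 Xa = comp1 s A. Proof. cst. Qed.

Lemma G1 : vc Xa (wl t Xa) = vc Xa (wr mu (comp1 s A)).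
Proof.
  rewrite wl_vc by cst. ra.
  assert (N : vc (wr psi A) (wl t (wl s al)) = vc (wl s (wl t al)) (wr (wr psi t) A)).
  { rewrite <- !wl_comp, <- wr_comp.
    apply (natur _ _ _ _ psi al (comp1 t s) (comp1 s t) (comp1 t A) A); auto. }
  rewrite (ctx2 _ _ _ _ _ _ _ N) by cst. ra.
  assert (N2 : vc (wl s al) (wl s (wl t al)) = vc (wl s al) (wl s (wr mu A))).
  { rewrite <- !wl_vc by cst. rewrite Hal_as. reflexivity. }
  rewrite (ctx2 _ _ _ _ _ _ _ N2) by cst. ra.
  assert (N3 : vc (wl s (wr mu A)) (vc (wr (wr psi t) A) (wl t (wr psi A)))
             = vc (wr psi A) (wr (wr mu s) A)).
  { rewrite !wl_wr, <- !wr_vc by cst. rewrite Hpsi. reflexivity. }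
  rewrite N3, wr_comp. reflexivity.
Qed.

Lemma G2 : vc Xa (wl t ea) = Xa.
Proof.
  rewrite wl_vc by cst. rewrite vcA by cst.
  rewrite G1, <- vcA by cst.
  rewrite wl_wr, !wr_comp, <- !wr_vc by cst. rewrite Hun1, !wr_id2.
  apply vc_idr'. rewrite Xa_s. n1. reflexivity.
Qed.

Lemma G3 : vc ea Xa = Xa.
Proof.
  rewrite <- vcA by cst.
  pose proof (natur _ _ _ _ eta Xa (id1 k) t (comp1 t (comp1 s A)) (comp1 s A) Heta_s Heta_t
     ltac:(rewrite Xa_s; n1; reflexivity) Xa_t) as N.
  rewrite wl_id1 in N. rewrite N.
  rewrite vcA by cst.
  rewrite G1, <- vcA by cst.
  rewrite !wr_comp, <- !wr_vc by cst. rewrite Hun2, !wr_id2.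
  apply vc_idr'. rewrite Xa_s. n1. reflexivity.
Qed.

Lemma G4 (lam : C K l' k) : s2 lam = comp1 s A -> t2 lam = A ->
  vc lam Xa = vc al (wl t lam) -> vc lam ea = lam.
Proof.
  intros H1 H2 H3. rewrite vcA by cst.
  rewrite H3. rewrite <- vcA by cst.
  pose proof (natur _ _ _ _ eta lam (id1 k) t (comp1 s A) A Heta_s Heta_t H1 H2) as N.
  rewrite wl_id1 in N. rewrite <- N, vcA by cst. rewrite Hal_un. apply vc_idl'. auto.
Qed.
End Alg.

Lemma veps_alg l' (V : Hom K l' J) : is_alg t mu eta (comp1 v V) (wr (wl v eps) V).
Proof. destruct alg_v as [[H1 H2] [H3 H4]]. apply alg_wh; auto. Qed.

Lemma veps_nat l' (X Y : Hom K l' J) (z : C K l' J) : s2 z = X -> t2 z = Y ->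
  vc (wr (wl v eps) Y) (wl t (wl v z)) = vc (wl v z) (wr (wl v eps) X).
Proof. intros H1 H2.
  replace (wl t (wl v z)) with (wl v (wl (comp1 f v) z))
    by (rewrite <- Hvf, !wl_comp; reflexivity).
  rewrite <- !wl_wr, <- !wl_vc by cst.
  rewrite (natur _ _ _ _ eps z (comp1 f v) (id1 J) X Y); auto. rewrite wl_id1. reflexivity.
Qed.

Lemma W1 l' (V : Hom K l' J) : wr (vc iota pi) V =
  vc (vc (wl s (wr (wl v eps) V)) (wr psi (comp1 v V))) (wr eta (comp1 s (comp1 v V))).
Proof. rewrite Hiotapi, !wr_vc by cst. rewrite <- vcA by cst.
  rewrite <- wl_wr, <- !wr_comp, comp1A. reflexivity. Qed.

Lemma W2 l' (V : Hom K l' J) : wr (wl v eps) (comp1 Js V) =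
  vc (wr pi V) (vc (vc (wl s (wr (wl v eps) V)) (wr psi (comp1 v V))) (wl t (wr iota V))).
Proof. rewrite wr_comp, HJs2, !wr_vc by cst. rewrite <- (vcA _ (wl s _)) by cst.
  rewrite <- !wr_comp, !wl_wr. reflexivity. Qed.

Lemma EM1_iff (W : Hom K l k) (rho : C K l k) :
  EM_1cell (Imon_t l) (Imon_mu l) (Imon_eta l) t mu eta W rho <-> is_alg t mu eta W rho.
Proof. unfold EM_1cell, EMw_1cell, Imon_t, Imon_mu, Imon_eta, is_alg, cell2.
  rewrite wl_id2, wr_id1, !comp1_id1r. split.
  - intros [[[H1 H2] H3] H4]. rewrite vc_idl' in H3 by cst. auto.
  - intros [[H1 H2] [H3 H4]]. rewrite vc_idl' by cst. auto.
Qed.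

Lemma EMw2_iff (W : Hom K l k) (rho lam : C K l k) : is_alg t mu eta W rho ->
  (EMw_2cell (Imon_t l) (Imon_mu l) t eta (comp1 s W) (EMw_comp_cell s psi W rho) W rho lam
   <-> cell2 lam (comp1 s W) W /\ vc lam (vc (wl s rho) (wr psi W)) = vc rho (wl t lam)).
Proof. intros [[H1 H2] [H3 H4]].
  unfold EMw_2cell, EMw_comp_cell, Imon_t, Imon_mu, Imon_eta, cell2.
  rewrite wl_id2, !wr_id1, !comp1_id1r. split.
  - intros [[H5 H6] [H7 H8]]. rewrite !vc_idl' in H7 by cst. auto.
  - intros [[H5 H6] H7]. rewrite !vc_idl' by cst. split; auto. split; auto.
    rewrite vcA by cst. rewrite H4. symmetry. apply vc_idl'. auto.
Qed.

Lemma Flam (V : Hom K l J) (z : C K l J) : cell2 z (comp1 Js V) V ->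
  vc (vc (wl v z) (wr pi V)) (vc (wl s (wr (wl v eps) V)) (wr psi (comp1 v V)))
  = vc (wr (wl v eps) V) (wl t (vc (wl v z) (wr pi V))).
Proof. intros [H1 H2].
  rewrite wl_vc by cst. rewrite (vcA _ (wr (wl v eps) V)) by cst.
  rewrite veps_nat with (X := comp1 Js V) by auto. rewrite W2.
  ra.
  rewrite <- (wl_vc _ _ _ _ t (wr iota V)) by cst. rewrite <- wr_vc by cst. rewrite W1.
  rewrite (vcA _ (wl s (wr (wl v eps) V))) by cst.
  destruct (veps_alg _ V) as [[H3 H4] [H5 H6]].
  rewrite G2 by auto. reflexivity.
Qed.

Lemma Gmorph (V : Hom K l J) (lam : C K l k) :
  s2 lam = comp1 s (comp1 v V) -> t2 lam = comp1 v V ->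
  vc lam (vc (wl s (wr (wl v eps) V)) (wr psi (comp1 v V))) = vc (wr (wl v eps) V) (wl t lam) ->
  vc (wr (wl v eps) V) (wl t (vc lam (wr iota V))) = vc (vc lam (wr iota V)) (wr (wl v eps) (comp1 Js V)).
Proof. intros H1 H2 H3. destruct (veps_alg _ V) as [[H4 H5] [H6 H7]].
  rewrite wl_vc by cst. rewrite (vcA _ (wr (wl v eps) V)) by cst. rewrite <- H3.
  rewrite W2. ra.
  assert (E : vc (wr iota V) (wr pi V) = wr (vc iota pi) V) by (rewrite wr_vc by cst; reflexivity).
  rewrite (ctx2 _ _ _ _ _ _ _ E) by cst.
  rewrite W1. rewrite (vcA _ (wl s (wr (wl v eps) V))) by cst.
  rewrite (ctx2 _ _ _ _ _ _ _ (G3 _ _ _ H4 H5 H6)) by cst.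
  ra. reflexivity.
Qed.

Definition TA := {V : Hom K l J & {zeta : C K l J | cell2 zeta (comp1 Js V) V}}.
Definition TB := {W : Hom K l k & {rho : C K l k & {lam : C K l k |
                 EM_1cell (Imon_t l) (Imon_mu l) (Imon_eta l) t mu eta W rho /\
                 EMw_2cell (Imon_t l) (Imon_mu l) t eta
                   (comp1 s W) (EMw_comp_cell s psi W rho) W rho lam}}}.

Lemma Fok (V : Hom K l J) (z : C K l J) (p : cell2 z (comp1 Js V) V) :
  EM_1cell (Imon_t l) (Imon_mu l) (Imon_eta l) t mu eta (comp1 v V) (wr (wl v eps) V) /\
  EMw_2cell (Imon_t l) (Imon_mu l) t eta
    (comp1 s (comp1 v V)) (EMw_comp_cell s psi (comp1 v V) (wr (wl v eps) V))
    (comp1 v V) (wr (wl v eps) V) (vc (wl v z) (wr pi V)).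
Proof. split. apply EM1_iff, veps_alg. apply EMw2_iff; [apply veps_alg|].
  split; [destruct p; split; cst| apply Flam; auto]. Qed.

Definition Fmap (x : TA) : TB :=
  existT _ (comp1 v (projT1 x)) (existT _ (wr (wl v eps) (projT1 x))
    (exist _ (vc (wl v (proj1_sig (projT2 x))) (wr pi (projT1 x)))
       (Fok _ _ (proj2_sig (projT2 x))))).

Lemma Gspec (y : TB) : {x : TA | comp1 v (projT1 x) = projT1 y /\
   wr (wl v eps) (projT1 x) = projT1 (projT2 y) /\
   wl v (proj1_sig (projT2 x)) = vc (proj1_sig (projT2 (projT2 y))) (wr iota (projT1 x))}.
Proof.
  destruct y as [W [rho [lam [H1 H2]]]]. simpl.
  apply EM1_iff in H1. apply (EMw2_iff _ _ _ H1) in H2.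
  assert (EV : exists V, comp1 v V = W /\ wr (wl v eps) V = rho)
    by (destruct (Hump1 _ _ _ H1) as [V [HV _]]; eauto).
  apply constructive_indefinite_description in EV. destruct EV as [V [E1 E2]].
  subst W rho. destruct H2 as [[H3 H4] H5].
  assert (EZ : exists z, cell2 z (comp1 Js V) V /\ wl v z = vc lam (wr iota V)).
  { destruct (Hump2 _ (comp1 Js V) V (vc lam (wr iota V))) as [z [Hz _]].
    - split; cst.
    - apply Gmorph; auto.
    - eauto. }
  apply constructive_indefinite_description in EZ. destruct EZ as [z [Hz1 Hz2]].
  exists (existT _ V (exist _ z Hz1)). simpl. auto.
Qed.

Definition Gmap (y : TB) : TA := proj1_sig (Gspec y).

Lemma GF (x : TA) : Gmap (Fmap x) = x.
Proof.
  destruct x as [V [z p]]. unfold Gmap.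
  destruct (Gspec (Fmap (existT _ V (exist _ z p)))) as [[V' [z' p']] [E1 [E2 E3]]].
  simpl in *.
  assert (V' = V).
  { destruct (Hump1 _ _ _ (veps_alg _ V)) as [X0 [_ U]].
    transitivity X0; [symmetry; apply U; auto|apply U; auto]. }
  subst V'. destruct p as [Hp1 Hp2]. destruct p' as [Hq1 Hq2].
  assert (E4 : wl v z' = wl v z).
  { rewrite E3, <- vcA by cst. rewrite <- wr_vc by cst. rewrite Hpiiota, wr_id2.
    apply vc_idr'. cst. }
  assert (z' = z).
  { destruct (Hump2 _ (comp1 Js V) V (wl v z)) as [z0 [_ U]].
    - split; cst.
    - apply veps_nat; auto.
    - assert (Hzz : cell2 z (comp1 Js V) V /\ wl v z = wl v z) by (split; [split|]; auto).
      assert (Hzz' : cell2 z' (comp1 Js V) V /\ wl v z' = wl v z) by (split; [split|]; auto).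
      transitivity z0; [symmetry; exact (U _ Hzz')| exact (U _ Hzz)]. }
  subst z'. f_equal. f_equal. apply proof_irrelevance.
Qed.

Lemma FG (y : TB) : Fmap (Gmap y) = y.
Proof.
  destruct y as [W [rho [lam H]]]. unfold Gmap.
  destruct (Gspec (existT _ W (existT _ rho (exist _ lam H)))) as [[V [z p]] [E1 [E2 E3]]].
  simpl in *. unfold Fmap; simpl. subst W rho.
  pose proof H as [H1 H2]. apply EM1_iff in H1. apply (EMw2_iff _ _ _ H1) in H2.
  destruct H1 as [[H4 H5] [H6 H7]]. destruct H2 as [[H8 H9] H10]. destruct p as [Hp1 Hp2].
  assert (L : vc (wl v z) (wr pi V) = lam).
  { rewrite E3, <- vcA by cst. rewrite <- wr_vc by cst. rewrite W1.
    apply G4; auto. }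
  generalize (Fok V z (conj Hp1 Hp2)) as q. rewrite L. intro q.
  rewrite (proof_irrelevance _ q H). reflexivity.
Qed.

Lemma bij : exists (F : TA -> TB) (G : TB -> TA),
    (forall x, G (F x) = x) /\ (forall y, F (G y) = y).
Proof. exists Fmap, Gmap. split; [apply GF|apply FG]. Qed.
End Main.

Theorem lemma3p6
  (K : TwoCat) (HEM : admits_EM K) (Hsplit : idempotents_split K)
  (l k : Ob K) (t : Hom K k k) (mu eta : C K k k) (Hmon : is_monad t mu eta)
  (* J^w(t) = J(t), with its Eilenberg-Moore data *)
  (J : Ob K) (v : Hom K J k) (f : Hom K k J) (eps : C K J J)
  (HJ : EM_data t mu eta J v f eps)
  (* the 1-cell (s, psi) : t -> t of EM^w(K) *)
  (s : Hom K k k) (psi : C K k k) (Hs : EMw_1cell t mu t mu s psi)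
  (* the fixed splitting  s v ==pi==> s~ ==iota==> s v  of the idempotent
     s v eps * psi v * eta s v *)
  (sv : Hom K J k) (pi iota : C K J k)
  (Hpi : cell2 pi (comp1 s v) sv) (Hiota : cell2 iota sv (comp1 s v))
  (Hpiiota : vc pi iota = id2 sv)
  (Hiotapi : vc iota pi =
             vc (wl s (wl v eps)) (vc (wr psi v) (wr eta (comp1 s v))))
  (* Js = J^w(s, psi) : J -> J *)
  (Js : Hom K J J)
  (HJs1 : comp1 v Js = sv)
  (HJs2 : wr (wl v eps) Js =
          vc pi (vc (wl s (wl v eps)) (vc (wr psi v) (wl t iota)))) :
  exists (F : {V : Hom K l J & {zeta : C K l J | cell2 zeta (comp1 Js V) V}} ->
              {W : Hom K l k & {rho : C K l k & {lam : C K l k |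
                 EM_1cell (Imon_t l) (Imon_mu l) (Imon_eta l) t mu eta W rho /\
                 EMw_2cell (Imon_t l) (Imon_mu l) t eta
                   (comp1 s W) (EMw_comp_cell s psi W rho) W rho lam}}})
         (G : {W : Hom K l k & {rho : C K l k & {lam : C K l k |
                 EM_1cell (Imon_t l) (Imon_mu l) (Imon_eta l) t mu eta W rho /\
                 EMw_2cell (Imon_t l) (Imon_mu l) t eta
                   (comp1 s W) (EMw_comp_cell s psi W rho) W rho lam}}} ->
              {V : Hom K l J & {zeta : C K l J | cell2 zeta (comp1 Js V) V}}),
    (forall x, G (F x) = x) /\ (forall y, F (G y) = y).
Proof.
  destruct Hmon as [[Hmu_s Hmu_t] [[Heta_s Heta_t] [Hassoc [Hun1 Hun2]]]].
  destruct HJ as [[Heps_s Heps_t] [Hvf [Hmu_def [Htri1 [Htri2 [Hump1 Hump2]]]]]].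
  destruct Hs as [[Hpsi_s Hpsi_t] Hpsi]. destruct Hpi as [Hpi_s Hpi_t].
  destruct Hiota as [Hiota_s Hiota_t].
  exact (bij K l k t mu eta Hmu_s Hmu_t Heta_s Heta_t Hun1 Hun2 J v f eps Heps_s Heps_t
    Hvf Hmu_def Htri1 Hump1 Hump2 s psi Hpsi_s Hpsi_t Hpsi sv pi iota Hpi_s Hpi_t
    Hiota_s Hiota_t Hpiiota Hiotapi Js HJs1 HJs2).
Qed.
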